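(* Let $n>0$, $c>1$, and $k=\frac{cn}{c^2-1}$. Consider the algorithm in which each agent walks clockwise until it has travelled $k$ units of distance, and then (if rendezvous has not yet occurred) reverses and walks anti-clockwise forever. In the no-communication setting, for every initial placement of the two agents, they rendezvous by time $\frac{cn}{c^2-1}$. Hence the optimal rendezvous time without communication is exactly $\frac{cn}{c^2-1}$.
   Context: Model: the cycle is the continuous circle $\mathbb{R}/n\mathbb{Z}$ of length $n$; it is anonymous. Two agents $A$ and $B$ are placed by an adversary at arbitrary initial points and start at the same time. Both run the same deterministic algorithm; they are identical except that the slower agent $B$ has speed $1$ and the faster agent $A$ has speed $c>1$ (an agent does not know which one it is). Both know $n$ and $c$, share a sense of direction (clockwise vs. anti-clockwise), and have a pedometer measuring the distance they have travelled. Agents detect each other when they are at the same point (rendezvous). No-communication setting: the agents cannot observe anything other than the other agent being at their current location. The rendezvous time of an algorithm is the worst case, over all initial placements, of the time until the agents are co-located; the lower bound $\frac{cn}{c^2-1}$ on it holds for every algorithm in this setting. *)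

(* Defs.v *)
From Stdlib Require Import Reals Lra ZArith.
Open Scope R_scope.

(* Points of the cycle R/nZ are represented by reals; two reals denote the
   same point of the cycle of length n iff they differ by an integer multiple of n. *)
Definition same_point (n x y : R) : Prop :=
  exists m : Z, x = y + IZR m * n.

(* Signed displacement (clockwise = positive direction) of an agent running
   the algorithm "walk clockwise for k units of distance, then reverse and walk
   anti-clockwise forever", as a function of the distance d >= 0 travelled
   (read off the pedometer). *)
Definition displacement (k d : R) : R :=
  if Rle_dec d k then d else 2 * k - d.

Definition position (k v p t : R) : R := p + displacement k (v * t).

Definition turn_dist (n c : R) : R := c * n / (c ^ 2 - 1).

(* Main.v *)
Require Import Defs.
From Stdlib Require Import Reals Lra.
Open Scope R_scope.

Theorem theorem1 (n c : R) (hn : 0 < n) (hc : 1 < c) (pA pB : R) :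
  exists t : R, 0 <= t <= turn_dist n c /\
    same_point n (position (turn_dist n c) c pA t)
                 (position (turn_dist n c) 1 pB t).
Proof.
  set (k := turn_dist n c).
  assert (Hk : (c - 1) * (c + 1) * k = c * n).
  { unfold k, turn_dist. field. nra. }
  assert (Hkpos : 0 < k).
  { unfold k, turn_dist. apply Rdiv_lt_0_compat; nra. }
  set (d := pA - pB).
  set (a := d - (c - 1) * k).
  destruct (archimed (a / n)) as [H1 H2].
  set (m := up (a / n)).
  assert (Hm1 : a < IZR m * n).
  { apply (Rmult_lt_compat_r n) in H1; auto.
    replace (a / n * n) with a in H1 by (field; lra). exact H1. }
  assert (Hm2 : IZR m * n <= a + n).
  { assert (IZR m <= a / n + 1) by (unfold m; lra).
    apply (Rmult_le_compat_r n) in H; try lra.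
    replace ((a / n + 1) * n) with (a + n) in H by (field; lra). exact H. }
  assert (Hn2 : n = (c - 1) * k + (c - 1) * k / c).
  { apply (Rmult_eq_reg_l c); [|lra]. field_simplify; [|lra]. nra. }
  unfold same_point, position, displacement.
  destruct (Rle_dec d (IZR m * n)) as [Hd | Hd].
  - exists ((IZR m * n - d) / (c - 1)).
    assert (Ht : (IZR m * n - d) / (c - 1) <= k / c).
    { apply (Rmult_le_reg_l (c - 1)); [lra|].
      replace ((c - 1) * ((IZR m * n - d) / (c - 1))) with (IZR m * n - d) by (field; lra).
      replace ((c - 1) * (k / c)) with ((c-1) * k / c) by (field; lra).
      unfold a in Hm2. lra. }
    assert (Ht0 : 0 <= (IZR m * n - d) / (c - 1)).
    { unfold Rdiv; apply Rmult_le_pos; [lra|]; left; apply Rinv_0_lt_compat; lra. }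
    assert (Hkc : k / c <= k).
    { apply (Rmult_le_reg_l c); [lra|]. replace (c * (k / c)) with k by (field; lra). nra. }
    split; [lra|].
    assert (Hct : c * ((IZR m * n - d) / (c - 1)) <= k).
    { apply (Rmult_le_compat_l c) in Ht; [|lra].
      replace (c * (k / c)) with k in Ht by (field; lra). exact Ht. }
    exists m.
    destruct (Rle_dec (c * ((IZR m * n - d) / (c - 1))) k); [|lra].
    destruct (Rle_dec (1 * ((IZR m * n - d) / (c - 1))) k); [|lra].
    unfold d. field. lra.
  - exists ((d + 2 * k - IZR m * n) / (c + 1)).
    set (t := (d + 2 * k - IZR m * n) / (c + 1)).
    assert (Ht : (c + 1) * t = d + 2 * k - IZR m * n) by (unfold t; field; lra).
    assert (Htk : t <= k).
    { unfold a in Hm1. nra. }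
    assert (Htkc : k <= c * t).
    { assert (c * ((c+1) * t) >= c * (2*k)) by nra. nra. }
    split; [split; nra|].
    exists m.
    destruct (Rle_dec (c * t) k) as [Hle|Hle].
    + assert (c * t = k) by lra.
      destruct (Rle_dec (1 * t) k); [|lra].
      unfold d in Ht. nra.
    + destruct (Rle_dec (1 * t) k); [|lra].
      unfold d in Ht. nra.
Qed.
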